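(* Let $q$ be a primitive $2d$-th root of unity with $d\ge2$ (and $q\neq\pm1,\pm i$). Then the subalgebra $H_{\{1\}}^{Inv}$ of invariant elements of $H_{\{1\}}$ is spanned (equivalently, generated as an algebra) by the monomials $x_1^{kd}y_1^{k'd}$ with $k,k'\in\mathbb N_0$ and $4\mid(k-k')$.
   Context: Fix a square root $q^{1/2}$ of $q$. $H_{\{1\}}$ is the unital $\mathbb C$-algebra generated by $x_1,y_1$ with relation $x_1y_1=qy_1x_1$. $U_q(gl(2,\mathbb R))$, generated by $E,F,K^{\pm1},L^{\pm1}$, acts on it by $L1=K1=1$, $E1=F1=0$, $Lx_1=q^{1/2}x_1$, $Ly_1=q^{1/2}y_1$, $Kx_1=q^{-1/2}x_1$, $Ky_1=q^{1/2}y_1$, $Ex_1=q^{1/2}y_1$, $Ey_1=0$, $Fx_1=0$, $Fy_1=q^{-1/2}x_1$, extended by $K(ab)=K(a)K(b)$, $L(ab)=L(a)L(b)$, $E(ab)=E(a)K(b)+K^{-1}(a)E(b)$, $F(ab)=F(a)K(b)+K^{-1}(a)F(b)$. An element $a$ is an invariant element of degree $r$ if $Ea=Fa=0$, $Ka=a$, $La=q^{r/2}a$; $H_{\{1\}}^{Inv}$ is the subalgebra spanned by all invariant elements. *)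

(* Defs.v *)
From HB Require Import structures.
From mathcomp Require Import all_boot all_order all_algebra.
Set Implicit Arguments. Unset Strict Implicit. Unset Printing Implicit Defensive.
Import Order.TTheory GRing.Theory Num.Theory.
Local Open Scope ring_scope.

(* Concrete model of the quantum plane H_{1} = C<x1,y1>/(x1 y1 = q y1 x1).
   An element p : {poly {poly C}} represents
        sum_{a,b} ((p`_a)`_b) x1^a y1^b   (PBW basis x1^a y1^b).
   Using y1^b x1^c = q^{-bc} x1^c y1^b, the product is
     (x1^a y1^b)(x1^c y1^e) = q^{-bc} x1^{a+c} y1^{b+e}. *)
Section QuantumPlane.
Variable C : numClosedFieldType.
Variable q : C.

Definition qtw (c : nat) (P : {poly C}) : {poly C} :=
  \poly_(i < size P) (q ^- (i * c) * P`_i).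

Definition qmul (p r : {poly {poly C}}) : {poly {poly C}} :=
  \sum_(a < size p) \sum_(c < size r)
     ((qtw c p`_a * r`_c)%:P * 'X^(a + c)).

Definition qone : {poly {poly C}} := 1.
Definition qx1 : {poly {poly C}} := 'X.
Definition qy1 : {poly {poly C}} := ('X)%:P.

Definition qexp (p : {poly {poly C}}) (n : nat) : {poly {poly C}} :=
  iter n (qmul p) qone.

End QuantumPlane.

Definition qsc (C : numClosedFieldType) (c : C) (u : {poly {poly C}}) : {poly {poly C}} :=
  c%:P *: u.

Definition is_linear_op (C : numClosedFieldType) (T : {poly {poly C}} -> {poly {poly C}}) :=
  forall (c : C) (u v : {poly {poly C}}), T (qsc c u + v) = qsc c (T u) + T v.

(* E, F, K, Kinv (= K^{-1}), L : the operators by which U_q(gl(2,R))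
   acts on H_{1}, with sq a fixed square root q^{1/2} of q. *)
Definition is_Uq_action (C : numClosedFieldType) (q sq : C)
  (E F K Kinv L : {poly {poly C}} -> {poly {poly C}}) : Prop :=
  [/\ [/\ is_linear_op E, is_linear_op F, is_linear_op K,
          is_linear_op Kinv & is_linear_op L],
      (forall a, K (Kinv a) = a) /\ (forall a, Kinv (K a) = a),
      [/\ L (qone C) = qone C, K (qone C) = qone C,
          E (qone C) = 0 & F (qone C) = 0],
      [/\ L (qx1 C) = qsc sq (qx1 C), L (qy1 C) = qsc sq (qy1 C),
          K (qx1 C) = qsc sq^-1 (qx1 C) & K (qy1 C) = qsc sq (qy1 C)] /\
      [/\ E (qx1 C) = qsc sq (qy1 C), E (qy1 C) = 0,
          F (qx1 C) = 0 & F (qy1 C) = qsc sq^-1 (qx1 C)] &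
      [/\ forall a b, K (qmul q a b) = qmul q (K a) (K b),
          forall a b, L (qmul q a b) = qmul q (L a) (L b),
          forall a b, E (qmul q a b) = qmul q (E a) (K b) + qmul q (Kinv a) (E b) &
          forall a b, F (qmul q a b) = qmul q (F a) (K b) + qmul q (Kinv a) (F b)]].

Definition invariant_of_degree (C : numClosedFieldType) (sq : C)
  (E F K L : {poly {poly C}} -> {poly {poly C}}) (r : nat) (a : {poly {poly C}}) :=
  [/\ E a = 0, F a = 0, K a = a & L a = qsc (sq ^+ r) a].

Definition in_span (C : numClosedFieldType) (S : {poly {poly C}} -> Prop)
  (v : {poly {poly C}}) : Prop :=
  exists (n : nat) (c : 'I_n -> C) (s : 'I_n -> {poly {poly C}}),
    (forall i, S (s i)) /\ v = \sum_(i < n) qsc (c i) (s i).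

(* Main.v *)
Require Import Defs.
From HB Require Import structures.
From mathcomp Require Import all_boot all_order all_algebra.
From mathcomp Require Import ring zify.
Import Order.TTheory GRing.Theory Num.Theory.
Set Implicit Arguments. Unset Strict Implicit. Unset Printing Implicit Defensive.
Local Open Scope ring_scope.

Definition mono (C : numClosedFieldType) (i j : nat) : {poly {poly C}} :=
  ('X^j)%:P * 'X^i.
Definition ms (C : numClosedFieldType) (c : C) (i j : nat) : {poly {poly C}} :=
  qsc c (mono C i j).
Definition coefij (C : numClosedFieldType) (a : {poly {poly C}}) i j : C := (a`_i)`_j.

Lemma qsc_polyC (C : numClosedFieldType) (c : C) u : qsc c u = (c%:P)%:P * u.
Proof. by rewrite /qsc -mul_polyC. Qed.

Lemma coef_qtw (C : numClosedFieldType) (q : C) c P n :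
  (qtw q c P)`_n = q ^- (n * c) * P`_n.
Proof.
rewrite /qtw coef_poly; case: ltnP => // H.
by rewrite nth_default // mulr0.
Qed.

Lemma ms0 (C : numClosedFieldType) i j : ms (0:C) i j = 0.
Proof. by rewrite /ms /qsc scale0r. Qed.

Lemma ms1 (C : numClosedFieldType) i j : ms (1:C) i j = mono C i j.
Proof. by rewrite /ms /qsc scale1r. Qed.

Lemma coef_ms (C : numClosedFieldType) (c : C) i j i' j' :
  coefij (ms c i j) i' j' = c * ((i' == i) && (j' == j))%:R.
Proof.
rewrite /coefij /ms qsc_polyC /mono coefCM. idtac. rewrite (coefCM ('X^j : {poly C})) coefXn.
case: eqP => _ /=; last by rewrite !mulr0 coef0.
by rewrite mulr1 coefCM coefXn.
Qed.

Lemma coef_lin (C : numClosedFieldType) (c : C) u v i j :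
  coefij (qsc c u + v) i j = c * coefij u i j + coefij v i j.
Proof. by rewrite /coefij qsc_polyC coefD coefCM coefD coefCM. Qed.

Lemma qmul0p (C : numClosedFieldType) (q : C) r : qmul q 0 r = 0.
Proof. by rewrite /qmul size_poly0 big_ord0. Qed.

Lemma qmulp0 (C : numClosedFieldType) (q : C) p : qmul q p 0 = 0.
Proof. by rewrite /qmul big1 // => i _; rewrite size_poly0 big_ord0. Qed.

Lemma coef_ms_poly (C : numClosedFieldType) (c : C) i j a :
  (ms c i j)`_a = if a == i then c *: 'X^j else 0.
Proof.
rewrite /ms qsc_polyC /mono coefCM coefCM coefXn.
by case: eqP => _; rewrite ?mulr1 ?mulr0 // mul_polyC.
Qed.

Lemma size_ms (C : numClosedFieldType) (c : C) i j : c != 0 -> size (ms c i j) = i.+1.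
Proof.
move=> c0; rewrite /ms qsc_polyC /mono mulrA -polyCM size_Cmul ?size_polyXn //.
by rewrite mul_polyC scaler_eq0 negb_or c0 /= -size_poly_eq0 size_polyXn.
Qed.

Lemma qmul_ms (C : numClosedFieldType) (q : C) c e i j k l :
  qmul q (ms c i j) (ms e k l) = ms (c * e * q ^- (j * k)) (i + k) (j + l).
Proof.
have [->|c0] := eqVneq c 0; first by rewrite ms0 qmul0p !mul0r ms0.
have [->|e0] := eqVneq e 0; first by rewrite ms0 qmulp0 mulr0 mul0r ms0.
rewrite /qmul size_ms // big_ord_recr /= big1 ?add0r; last first.
  move=> a _; rewrite big1 // => b _.
  by rewrite coef_ms_poly (ltn_eqF (ltn_ord a)) /qtw size_poly0 poly_def big_ord0 mul0r polyC0 mul0r.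
rewrite size_ms // big_ord_recr /= big1 ?add0r; last first.
  move=> b _; rewrite (coef_ms_poly e) (ltn_eqF (ltn_ord b)) mulr0 polyC0 mul0r //.
rewrite !coef_ms_poly !eqxx.
have -> : qtw q k (c *: 'X^j) * (e *: 'X^l) = (c * e * q ^- (j * k)) *: 'X^(j + l).
  apply/polyP => n; rewrite -scalerAr !coefZ coefMXn coefXn.
  have [->|ne] := eqVneq n (j+l).
    rewrite ltnNge leq_addl /= addnK coef_qtw coefZ coefXn eqxx. 
    by rewrite /=; set x := q ^- _; ring.
  case: ltnP => H; first by rewrite !mulr0.
  rewrite coef_qtw coefZ coefXn.
  have /negPf -> : (n - l)%N != j.
    by apply: contra ne => /eqP <-; apply/eqP; symmetry; exact: subnK H.
  by rewrite /= !mulr0.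
by rewrite /ms qsc_polyC /mono exprD -mul_polyC polyCM mulrA.
Qed.

Lemma qmul_mono (C : numClosedFieldType) (q : C) i j k l :
  qmul q (mono C i j) (mono C k l) = ms (q ^- (j * k)) (i + k) (j + l).
Proof. by rewrite -!ms1 qmul_ms !mul1r. Qed.

Lemma qone_mono (C : numClosedFieldType) : qone C = mono C 0 0.
Proof. by rewrite /qone /mono !expr0 mulr1. Qed.
Lemma qx1_mono (C : numClosedFieldType) : qx1 C = mono C 1 0.
Proof. by rewrite /qx1 /mono expr0 expr1 mul1r. Qed.
Lemma qy1_mono (C : numClosedFieldType) : qy1 C = mono C 0 1.
Proof. by rewrite /qy1 /mono expr0 expr1 mulr1. Qed.

Lemma qexp_x (C : numClosedFieldType) (q : C) n : qexp q (qx1 C) n = mono C n 0.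
Proof.
elim: n => [|n IH]; first by rewrite /qexp /= qone_mono.
by rewrite /qexp iterS -/(qexp q _ n) IH qx1_mono qmul_mono mul0n expr0 invr1 ms1 add1n.
Qed.

Lemma qexp_y (C : numClosedFieldType) (q : C) n : qexp q (qy1 C) n = mono C 0 n.
Proof.
elim: n => [|n IH]; first by rewrite /qexp /= qone_mono.
by rewrite /qexp iterS -/(qexp q _ n) IH qy1_mono qmul_mono muln0 expr0 invr1 ms1 add1n.
Qed.

Lemma mono_split (C : numClosedFieldType) (q : C) i j :
  mono C i j = qmul q (mono C i 0) (mono C 0 j).
Proof. by rewrite qmul_mono mul0n expr0 invr1 ms1 addn0. Qed.

Lemma qsc_ms (C : numClosedFieldType) (c e : C) i j : qsc c (ms e i j) = ms (c * e) i j.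
Proof. by rewrite /ms /qsc scalerA -polyCM. Qed.

Lemma ms_add (C : numClosedFieldType) (c e : C) i j : ms c i j + ms e i j = ms (c + e) i j.
Proof. by rewrite /ms /qsc -scalerDl -polyCD. Qed.

Lemma qsc1 (C : numClosedFieldType) (u : {poly {poly C}}) : qsc 1 u = u.
Proof. by rewrite /qsc scale1r. Qed.
Lemma qsc0 (C : numClosedFieldType) (u : {poly {poly C}}) : qsc 0 u = 0.
Proof. by rewrite /qsc scale0r. Qed.
Lemma qscr0 (C : numClosedFieldType) (c : C) : qsc c (0 : {poly {poly C}}) = 0.
Proof. by rewrite /qsc scaler0. Qed.

Lemma lin0 (C : numClosedFieldType) (T : {poly {poly C}} -> {poly {poly C}}) :
  is_linear_op T -> T 0 = 0.
Proof.
move=> HT; have := HT 1 0 0; rewrite qscr0 addr0 qsc1.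
by move/(congr1 (fun x => x - T 0)); rewrite addrK subrr => <-.
Qed.
Lemma linZ (C : numClosedFieldType) (T : {poly {poly C}} -> {poly {poly C}}) c u :
  is_linear_op T -> T (qsc c u) = qsc c (T u).
Proof. by move=> HT; have := HT c u 0; rewrite !addr0 (lin0 HT) addr0. Qed.
Lemma linD (C : numClosedFieldType) (T : {poly {poly C}} -> {poly {poly C}}) u v :
  is_linear_op T -> T (u + v) = T u + T v.
Proof. by move=> HT; have := HT 1 u v; rewrite !qsc1. Qed.
Lemma lin_ms (C : numClosedFieldType) (T : {poly {poly C}} -> {poly {poly C}}) c i j :
  is_linear_op T -> T (ms c i j) = qsc c (T (mono C i j)).
Proof. by move=> HT; rewrite /ms linZ. Qed.

Lemma decomp (C : numClosedFieldType) (a : {poly {poly C}}) :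
  a = \sum_(i < size a) \sum_(j < size a`_i) ms (a`_i`_j) i j.
Proof.
rewrite -{1}[a]coefK poly_def; apply: eq_bigr => i _.
rewrite -{1}[a`_i]coefK poly_def -mul_polyC rmorph_sum big_distrl /=.
apply: eq_bigr => j _.
by rewrite /ms qsc_polyC /mono -mul_polyC polyCM mulrA.
Qed.

Lemma lin_mono_zero (C : numClosedFieldType) (lam : {poly {poly C}} -> C) :
  (forall c u v, lam (qsc c u + v) = c * lam u + lam v) ->
  (forall i j, lam (mono C i j) = 0) -> forall a, lam a = 0.
Proof.
move=> Hl Hm a.
have l0 : lam 0 = 0.
  have := Hl 1 0 0; rewrite qscr0 addr0 mul1r.
  by move/(congr1 (fun x => x - lam 0)); rewrite addrK subrr => <-.
have lD u v : lam u = 0 -> lam v = 0 -> lam (u + v) = 0.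
  by move=> hu hv; have := Hl 1 u v; rewrite qsc1 hu hv addr0 mulr0.
rewrite (decomp a); apply: (big_ind (fun x => lam x = 0)) => // i _.
apply: (big_ind (fun x => lam x = 0)) => // j _.
by have := Hl (a`_i`_j) (mono C i j) 0; rewrite addr0 l0 addr0 Hm mulr0 /ms.
Qed.

Ltac qsimp := rewrite ?mul0n ?muln0 ?expr0 ?invr1 ?mulr1 ?mul1r ?add0n ?addn0.

Lemma K_mono (C : numClosedFieldType) (q sq : C) E F K Kinv L i j :
  is_Uq_action q sq E F K Kinv L ->
  K (mono C i j) = ms (sq^-1 ^+ i * sq ^+ j) i j.
Proof.
case=> [[lE lF lK lKi lL] [KKi KiK] [L1 K1 E1 F1] [[Lx Ly Kx Ky] [Ex Ey Fx Fy]] [KM LM EM FM]].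
have Hx : forall i, K (mono C i 0) = ms (sq^-1 ^+ i) i 0.
  elim=> [|n IH]; first by rewrite -qone_mono K1 qone_mono expr0 ms1.
  have -> : mono C n.+1 0 = qmul q (mono C 1 0) (mono C n 0).
    by rewrite qmul_mono; qsimp; rewrite ms1 add1n.
  by rewrite KM IH -qx1_mono Kx qx1_mono -/(ms _ 1 0) qmul_ms; qsimp; rewrite -exprS add1n.
have Hy : forall j, K (mono C 0 j) = ms (sq ^+ j) 0 j.
  elim=> [|n IH]; first by rewrite -qone_mono K1 qone_mono expr0 ms1.
  have -> : mono C 0 n.+1 = qmul q (mono C 0 1) (mono C 0 n).
    by rewrite qmul_mono; qsimp; rewrite ms1 add1n.
  by rewrite KM IH -qy1_mono Ky qy1_mono -/(ms _ 0 1) qmul_ms; qsimp; rewrite -exprS add1n.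
by rewrite (mono_split q) KM Hx Hy qmul_ms; qsimp.
Qed.

Lemma L_mono (C : numClosedFieldType) (q sq : C) E F K Kinv L i j :
  is_Uq_action q sq E F K Kinv L ->
  L (mono C i j) = ms (sq ^+ (i + j)) i j.
Proof.
case=> [[lE lF lK lKi lL] [KKi KiK] [L1 K1 E1 F1] [[Lx Ly Kx Ky] [Ex Ey Fx Fy]] [KM LM EM FM]].
have Hx : forall i, L (mono C i 0) = ms (sq ^+ i) i 0.
  elim=> [|n IH]; first by rewrite -qone_mono L1 qone_mono expr0 ms1.
  have -> : mono C n.+1 0 = qmul q (mono C 1 0) (mono C n 0).
    by rewrite qmul_mono; qsimp; rewrite ms1 add1n.
  by rewrite LM IH -qx1_mono Lx qx1_mono -/(ms _ 1 0) qmul_ms; qsimp; rewrite -exprS add1n.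
have Hy : forall j, L (mono C 0 j) = ms (sq ^+ j) 0 j.
  elim=> [|n IH]; first by rewrite -qone_mono L1 qone_mono expr0 ms1.
  have -> : mono C 0 n.+1 = qmul q (mono C 0 1) (mono C 0 n).
    by rewrite qmul_mono; qsimp; rewrite ms1 add1n.
  by rewrite LM IH -qy1_mono Ly qy1_mono -/(ms _ 0 1) qmul_ms; qsimp; rewrite -exprS add1n.
by rewrite (mono_split q) LM Hx Hy qmul_ms; qsimp; rewrite exprD.
Qed.

Lemma Kinv_mono (C : numClosedFieldType) (q sq : C) E F K Kinv L i j :
  is_Uq_action q sq E F K Kinv L -> sq != 0 ->
  Kinv (mono C i j) = ms (sq ^+ i * sq^-1 ^+ j) i j.
Proof.
move=> H s0; have HH := H.
case: HH => [[lE lF lK lKi lL] [KKi KiK] _ _ _].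
have -> : mono C i j = K (ms (sq ^+ i * sq^-1 ^+ j) i j).
  rewrite lin_ms // (K_mono _ _ H) qsc_ms mulrACA -!exprMn mulfV // mulVf //.
  by rewrite !expr1n mulr1 ms1.
by rewrite KiK.
Qed.

Fixpoint eseq (C : numClosedFieldType) (q sq : C) n : C :=
  if n is n'.+1 then sq * sq^-1 ^+ n' * q ^- (1 * n') + sq * eseq q sq n' * q ^- (0 * 0)
  else 0.
Fixpoint fseq (C : numClosedFieldType) (q sq : C) n : C :=
  if n is n'.+1 then sq^-1 * sq ^+ n' * q ^- (0 * 0) + sq^-1 * fseq q sq n' * q ^- (1 * 1)
  else 0.

Lemma E_mono (C : numClosedFieldType) (q sq : C) E F K Kinv L i j :
  is_Uq_action q sq E F K Kinv L -> sq != 0 ->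
  E (mono C i j) = ms (eseq q sq i * sq ^+ j) i.-1 j.+1.
Proof.
move=> H s0; have HH := H.
case: HH => [[lE lF lK lKi lL] [KKi KiK] [L1 K1 E1 F1] [[Lx Ly Kx Ky] [Ex Ey Fx Fy]] [KM LM EM FM]].
have Hx : forall i, E (mono C i 0) = ms (eseq q sq i) i.-1 1.
  elim=> [|n IH]; first by rewrite -qone_mono E1 ms0.
  have -> : mono C n.+1 0 = qmul q (mono C 1 0) (mono C n 0).
    by rewrite qmul_mono; qsimp; rewrite ms1 add1n.
  rewrite EM IH -qx1_mono Ex qx1_mono qy1_mono (K_mono _ _ H) (Kinv_mono _ _ H) // -/(ms _ 0 1).
  rewrite qmul_ms qmul_ms /=.
  case: n IH => [|n] IH /=; first by qsimp; rewrite ?mulr0 ?mul0r ?ms0 ?addr0.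
  by rewrite ms_add; qsimp; rewrite ?add1n ?expr1 ?addn1. 
have Hy : forall j, E (mono C 0 j) = 0.
  elim=> [|n IH]; first by rewrite -qone_mono E1.
  have -> : mono C 0 n.+1 = qmul q (mono C 0 1) (mono C 0 n).
    by rewrite qmul_mono; qsimp; rewrite ms1 add1n.
  by rewrite EM IH -qy1_mono Ey qmul0p qmulp0 addr0.
rewrite (mono_split q) EM Hx Hy qmulp0 addr0 (K_mono _ _ H) qmul_ms; qsimp.
by rewrite add1n.
Qed.

Lemma F_mono (C : numClosedFieldType) (q sq : C) E F K Kinv L i j :
  is_Uq_action q sq E F K Kinv L -> sq != 0 ->
  F (mono C i j) = ms (sq ^+ i * fseq q sq j) i.+1 j.-1.
Proof.
move=> H s0; have HH := H.
case: HH => [[lE lF lK lKi lL] [KKi KiK] [L1 K1 E1 F1] [[Lx Ly Kx Ky] [Ex Ey Fx Fy]] [KM LM EM FM]].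
have Hy : forall j, F (mono C 0 j) = ms (fseq q sq j) 1 j.-1.
  elim=> [|n IH]; first by rewrite -qone_mono F1 ms0.
  have -> : mono C 0 n.+1 = qmul q (mono C 0 1) (mono C 0 n).
    by rewrite qmul_mono; qsimp; rewrite ms1 add1n.
  rewrite FM IH -qy1_mono Fy qx1_mono qy1_mono (K_mono _ _ H) (Kinv_mono _ _ H) // -/(ms _ 1 0).
  rewrite qmul_ms qmul_ms /=.
  case: n IH => [|n] IH /=; first by qsimp; rewrite ?mulr0 ?mul0r ?ms0 ?addr0.
  by rewrite ms_add; qsimp; rewrite ?add1n ?expr1 ?addn1. 
have Hx : forall i, F (mono C i 0) = 0.
  elim=> [|n IH]; first by rewrite -qone_mono F1.
  have -> : mono C n.+1 0 = qmul q (mono C 1 0) (mono C n 0).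
    by rewrite qmul_mono; qsimp; rewrite ms1 add1n.
  by rewrite FM IH -qx1_mono Fx qmul0p qmulp0 addr0.
rewrite (mono_split q) FM Hx Hy qmul0p add0r (Kinv_mono _ _ H) // qmul_ms; qsimp.
by rewrite addn1.
Qed.

Lemma eseq_closed (C : numClosedFieldType) (sq : C) n : sq != 0 ->
  eseq (sq ^+ 2) sq n = sq ^+ n * \sum_(k < n) (sq^-1 ^+ 4) ^+ k.
Proof.
move=> s0; elim: n => [|n IH]; first by rewrite big_ord0 mulr0.
rewrite /= IH big_ord_recr /= mul1n muln0 expr0 invr1 mulr1.
set S := \sum_(i < n) _.
rewrite (exprAC sq 2 n) (exprAC sq^-1 4 n) !exprVn [sq ^+ n.+1]exprS.
set a := sq ^+ n.
have a0 : a != 0 by rewrite expf_neq0.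
field; by rewrite a0.
Qed.

Lemma fseq_closed (C : numClosedFieldType) (sq : C) n : sq != 0 ->
  fseq (sq ^+ 2) sq n = sq^-1 ^+ (3 * n) * sq ^+ 2 * \sum_(k < n) (sq ^+ 4) ^+ k.
Proof.
move=> s0; elim: n => [|n IH]; first by rewrite big_ord0 mulr0.
rewrite /= IH big_ord_recr /= mul1n muln0 expr0 invr1 mulr1.
rewrite mulnS exprD exprM (exprAC sq^-1 3 n) exprVn (exprAC sq 4 n).
set a := sq ^+ n; set S := \sum_(i < n) _.
have a0 : a != 0 by rewrite expf_neq0.
field; by rewrite s0 a0.
Qed.

Lemma geom_eq0 (C : numClosedFieldType) (x : C) n : x != 1 ->
  (\sum_(k < n) x ^+ k == 0) = (x ^+ n == 1).
Proof.
move=> x1; rewrite -[x ^+ n == 1]subr_eq0 subrX1 mulf_eq0 subr_eq0 (negPf x1) /=.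
by [].
Qed.

Lemma scalar_facts (C : numClosedFieldType) (d : nat) (q sq : C) :
  (2 <= d)%N -> (2 * d)%N.-primitive_root q -> sq ^+ 2 = q ->
  [/\ sq != 0, forall n, (eseq q sq n == 0) = (d %| n)%N,
      forall n, (fseq q sq n == 0) = (d %| n)%N & (sq ^+ d) ^+ 2 = -1].
Proof.
move=> d2 pq Hq.
have key m : ((q ^+ 2) ^+ m == 1) = (d %| m)%N.
  by rewrite -exprM -(prim_order_dvd pq) dvdn_pmul2l.
have q2 : q ^+ 2 != 1.
  by rewrite -[q ^+ 2]expr1 key; apply/negP => /dvdn_leq => /(_ isT); lia.
have s0 : sq != 0.
  apply/negP => /eqP s0; move: (prim_expr_order pq); rewrite -Hq s0 expr0n /= expr0n.
  have -> : (2 * d == 0)%N = false by lia.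
  by move/eqP; rewrite eq_sym oner_eq0.
have s4 : sq ^+ 4 = q ^+ 2 by rewrite -Hq -exprM.
split => //.
- move=> n; rewrite -Hq eseq_closed // mulf_eq0 expf_eq0 (negPf s0) andbF /=.
  rewrite exprVn s4 geom_eq0; last by rewrite invr_eq1.
  by rewrite exprVn invr_eq1 key.
- move=> n; rewrite -Hq fseq_closed // !mulf_eq0 expf_eq0 invr_eq0 (negPf s0) andbF /=.
  by rewrite s4 geom_eq0 // key.
- rewrite -exprM mulnC exprM Hq.
  have : (q ^+ d) ^+ 2 = 1 by rewrite -exprM mulnC prim_expr_order.
  move/eqP; rewrite sqrf_eq1 => /orP [|/eqP //].
  by rewrite -(prim_order_dvd pq) => /dvdn_leq => /(_ ltac:(lia)); lia.
Qed.

Lemma w_pow (C : numClosedFieldType) (w : C) : w ^+ 2 = -1 ->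
  forall k k' : nat, w ^+ k = w ^+ k' <-> (4 %| k%:Z - k'%:Z)%Z.
Proof.
move=> w2.
have n1 : (-1 : C) != 1.
  by rewrite eq_sym -addr_eq0 -mulr2n mulrn_eq0 oner_eq0.
have w0 : w != 0 by apply/negP => /eqP w0; move: w2; rewrite w0 expr0n /= => /eqP; rewrite eq_sym oppr_eq0 oner_eq0.
have w4 : w ^+ 4 = 1 by rewrite (exprM w 2 2) w2 expr2 mulrNN mulr1.
have key m : (w ^+ m == 1) = (4 %| m)%N.
  rewrite {1}(divn_eq m 4) exprD mulnC exprM w4 expr1n mul1r /dvdn.
  have : (m %% 4 < 4)%N by rewrite ltn_mod.
  case: (m %% 4)%N => [|[|[|[|r]]]] //= _.
  - by rewrite expr0 eqxx.
  - by rewrite expr1; apply/negP => /eqP w1; move: w2; rewrite w1 expr1n => /eqP; rewrite eq_sym (negPf n1).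
  - by rewrite w2 (negPf n1).
  - rewrite exprS w2 mulrN1; apply/negP => /eqP w1.
    by move: w2; rewrite -(opprK w) w1 sqrrN expr1n => /eqP; rewrite eq_sym (negPf n1).
suff main k k' : (k <= k')%N -> (w ^+ k = w ^+ k' <-> (4 %| k' - k)%N).
  move=> k k'; rewrite dvdzE; case: (leqP k k') => h.
    by rewrite distnEr // main.
  rewrite distnEl ?(ltnW h) // -main ?(ltnW h) //; split=> //.
move=> h; have -> : k' = (k + (k' - k))%N by rewrite subnKC.
rewrite addKn; move: (k' - k)%N => m; rewrite exprD -key; split.
  by move=> e; apply/eqP; apply: (mulfI (expf_neq0 k w0)); rewrite mulr1 -e.
by move/eqP => ->; rewrite mulr1.
Qed.

Lemma qscA (C : numClosedFieldType) (c e : C) u : qsc c (qsc e u) = qsc (c * e) u.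
Proof. by rewrite /qsc scalerA -polyCM. Qed.

Lemma span_add (C : numClosedFieldType) (S : {poly {poly C}} -> Prop) c u v :
  in_span S u -> in_span S v -> in_span S (qsc c u + v).
Proof.
move=> [n [c1 [s1 [H1 ->]]]] [m [c2 [s2 [H2 ->]]]].
exists (n + m)%N.
exists (fun i => match split i with inl a => c * c1 a | inr b => c2 b end).
exists (fun i => match split i with inl a => s1 a | inr b => s2 b end).
split.
  by move=> i; case: (split i).
have sl a : split (lshift m a) = inl a := unsplitK (inl a).
have sr b : split (rshift n b) = inr b := unsplitK (inr b).
rewrite big_split_ord /=; congr (_ + _).
  rewrite /qsc scaler_sumr; apply: eq_bigr => i _; rewrite sl.
  by rewrite -/(qsc _ _) -/(qsc _ _) qscA.
by apply: eq_bigr => i _; rewrite sr.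
Qed.

Lemma span0 (C : numClosedFieldType) (S : {poly {poly C}} -> Prop) : in_span S 0.
Proof. by exists 0%N, (fun _ => 0), (fun _ => 0); split => [[]//|]; rewrite big_ord0. Qed.

Lemma span1 (C : numClosedFieldType) (S : {poly {poly C}} -> Prop) c u :
  S u -> in_span S (qsc c u).
Proof.
move=> Su; exists 1%N, (fun _ => c), (fun _ => u); split => //.
by rewrite big_ord1.
Qed.

Lemma lam_lin (C : numClosedFieldType) (T : {poly {poly C}} -> {poly {poly C}}) i j i' j' (z : C) :
  is_linear_op T ->
  forall c u v, (fun b => coefij (T b) i' j' - z * coefij b i j) (qsc c u + v) =
    c * (fun b => coefij (T b) i' j' - z * coefij b i j) u +
    (fun b => coefij (T b) i' j' - z * coefij b i j) v.
Proof.
move=> HT c u v /=; rewrite HT !coef_lin.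
set a1 := coefij _ _ _; set a2 := coefij _ _ _; set a3 := coefij _ _ _; set a4 := coefij _ _ _.
ring.
Qed.

Unset Implicit Arguments.
Set Strict Implicit.
Theorem proposition5p4 (C : numClosedFieldType) (d : nat) (q sq : C)
  (E F K Kinv L : {poly {poly C}} -> {poly {poly C}}) :
  (2 <= d)%N ->
  (2 * d)%N.-primitive_root q ->
  q != 1 -> q != -1 -> q != 'i -> q != - 'i ->
  sq ^+ 2 = q ->
  is_Uq_action q sq E F K Kinv L ->
  forall v : {poly {poly C}},
    in_span (fun a => exists r : nat, invariant_of_degree sq E F K L r a) v
    <->
    in_span (fun m => exists k k' : nat,
               (4 %| (k%:Z - k'%:Z))%Z /\
               m = qmul q (qexp q (qx1 C) (k * d)) (qexp q (qy1 C) (k' * d))) v.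
Proof.
move=> d2 pq _ _ _ _ Hq H v.
have [s0 He Hf w2] := scalar_facts d2 pq Hq.
have HH := H; case: HH => [[lE lF lK lKi lL] _ _ _ _].
have sqkd k : sq ^+ (k * d) = (sq ^+ d) ^+ k by rewrite mulnC exprM.
have monoS k k' : qmul q (qexp q (qx1 C) (k * d)) (qexp q (qy1 C) (k' * d)) = mono C (k*d) (k'*d).
  by rewrite qexp_x qexp_y -mono_split.
have wk0 k : (sq ^+ d) ^+ k != 0 by rewrite !expf_neq0.
split; last first.
  move=> [n [c [s [Hs ->]]]]; exists n, c, s; split => // i.
  have [k [k' [h4 ->]]] := Hs i; exists (k * d + k' * d)%N; rewrite monoS; split.
  - rewrite (E_mono _ _ H) //.
    have /eqP -> : eseq q sq (k * d) == 0 by rewrite He dvdn_mull.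
    by rewrite mul0r ms0.
  - rewrite (F_mono _ _ H) //.
    have /eqP -> : fseq q sq (k' * d) == 0 by rewrite Hf dvdn_mull.
    by rewrite mulr0 ms0.
  - rewrite (K_mono _ _ H) exprVn !sqkd.
    have -> : (sq ^+ d) ^+ k = (sq ^+ d) ^+ k' by apply/(w_pow w2).
    by rewrite mulVf // ms1.
  - by rewrite (L_mono _ _ H).
move=> [n [c [s [Hs ->]]]].
pose S2 := (fun m => exists k k' : nat,
               (4 %| (k%:Z - k'%:Z))%Z /\
               m = qmul q (qexp q (qx1 C) (k * d)) (qexp q (qy1 C) (k' * d))).
have addS u w : in_span S2 u -> in_span S2 w -> in_span S2 (u + w).
  by move=> hu hw; rewrite -(qsc1 u); apply: span_add.
have scS e u : in_span S2 u -> in_span S2 (qsc e u).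
  by move=> hu; rewrite -(addr0 (qsc e u)); apply: span_add => //; apply: span0.
suff inv_span a : (exists r, invariant_of_degree sq E F K L r a) -> in_span S2 a.
  apply: (big_ind (in_span S2)) => //; first exact: span0.
  by move=> i _; apply: scS; apply: inv_span.
move=> [r [Ea Fa Ka La]].
have Edi i j : a`_i`_j != 0 -> (d %| i)%N.
  case: i => [|i] c0; first by rewrite dvdn0.
  have h : forall b, (fun b => coefij (E b) i j.+1 - (eseq q sq i.+1 * sq ^+ j) * coefij b i.+1 j) b = 0.
    apply: lin_mono_zero; first exact: lam_lin.
    move=> i' j' /=; rewrite (E_mono _ _ H) // -ms1 !coef_ms mul1r eqSS.
    case: (eqVneq j j') => [<-|nj]; last by rewrite !andbF !mulr0 subrr.
    rewrite !andbT; case: i' => [|i'] /=; first by rewrite !mul0r mulr0 subrr.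
    by rewrite eqSS; case: eqP => [<-|_]; rewrite ?subrr // !mulr0 subrr.
  move: (h a) => /=; rewrite Ea /coefij coef0 coef0 sub0r => /eqP.
  rewrite oppr_eq0 !mulf_eq0 expf_eq0 (negPf s0) andbF orbF (negPf c0) orbF.
  by rewrite -[X in X == 0]/(eseq q sq i.+1) He.
have Fdj i j : a`_i`_j != 0 -> (d %| j)%N.
  case: j => [|j] c0; first by rewrite dvdn0.
  have h : forall b, (fun b => coefij (F b) i.+1 j - (sq ^+ i * fseq q sq j.+1) * coefij b i j.+1) b = 0.
    apply: lin_mono_zero; first exact: lam_lin.
    move=> i' j' /=; rewrite (F_mono _ _ H) // -ms1 !coef_ms mul1r eqSS.
    case: (eqVneq i i') => [<-|nj]; last by rewrite !mulr0 subrr.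
    rewrite /=; case: j' => [|j'] /=; first by rewrite !mulr0 mul0r subrr.
    by rewrite eqSS; case: eqP => [<-|_]; rewrite ?subrr // !mulr0 subrr.
  move: (h a) => /=; rewrite Fa /coefij coef0 coef0 sub0r => /eqP.
  rewrite oppr_eq0 !mulf_eq0 expf_eq0 (negPf s0) andbF /= (negPf c0) orbF.
  by rewrite -[X in X == 0]/(fseq q sq j.+1) Hf.
have Kij i j : a`_i`_j != 0 -> sq^-1 ^+ i * sq ^+ j = 1.
  move=> c0.
  have h : forall b, (fun b => coefij (K b) i j - (sq^-1 ^+ i * sq ^+ j) * coefij b i j) b = 0.
    apply: lin_mono_zero; first exact: lam_lin.
    move=> i' j' /=; rewrite (K_mono _ _ H) // -ms1 !coef_ms mul1r.
    by case: eqP => [->|_]; case: eqP => [->|_]; rewrite /= ?subrr // !mulr0 subrr.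
  move: (h a) => /=; rewrite Ka /coefij => /eqP.
  rewrite -{1}(mul1r (a`_i`_j)) -mulrBl mulf_eq0 (negPf c0) orbF subr_eq0.
  by move/eqP => <-.
rewrite (decomp a); apply: (big_ind (in_span S2)) => //; first exact: span0.
move=> i _; apply: (big_ind (in_span S2)) => //; first exact: span0.
move=> j _; move: (nat_of_ord j) => {j} j; move: (nat_of_ord i) => {i} i.
have [->|c0] := eqVneq (a`_i`_j) 0; first by rewrite ms0; apply: span0.
rewrite /ms; apply: span1.
have hi := divnK (Edi _ _ c0); have hj := divnK (Fdj _ _ c0).
have hk := Kij _ _ c0; rewrite -hi -hj in hk *.
exists (i %/ d)%N, (j %/ d)%N; rewrite monoS; split => //.
apply/(w_pow w2); move: hk; rewrite exprVn !sqkd.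
by move=> e; apply: (mulfI (invr_neq0 (wk0 (i %/ d)%N))); rewrite e mulVf.
Qed.
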